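(* Let $a$ and $b$ be coprime odd integers and let $\beta\geq2$ be an integer. The following are equivalent: (1) $1\notin G_{(a,b)}(\beta)$; (2) $2^\beta\nmid(a+b)$; (3) $n\notin G_{(a,b)}(\beta)$ for all odd natural numbers $n$.
   Context: For coprime nonzero integers $a,b$ and an integer $\beta\geq0$, $G_{(a,b)}(\beta)$ is the set of positive integers $d$ such that $2^\beta d\mid(a^k+b^k)$ for some positive integer $k$. *)

(* Defs.v *)
From Stdlib Require Import ZArith.
Open Scope Z_scope.

Definition in_G (a b : Z) (beta : nat) (d : Z) : Prop :=
  0 < d /\ exists k : nat, (1 <= k)%nat /\
    (2 ^ Z.of_nat beta * d | a ^ Z.of_nat k + b ^ Z.of_nat k).

(* Main.v *)
Require Import Defs.
From Stdlib Require Import ZArith Znumtheory Lia.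
Open Scope Z_scope.

Fixpoint geo (a b : Z) (k : nat) : Z :=
  match k with
  | O => 0
  | Datatypes.S k' => a * geo a b k' + (- b) ^ Z.of_nat k'
  end.

Lemma geo_id a b k : (a + b) * geo a b k = a ^ Z.of_nat k - (- b) ^ Z.of_nat k.
Proof.
  induction k as [|k IH]; simpl geo.
  - simpl. ring.
  - rewrite Nat2Z.inj_succ, !Z.pow_succ_r by lia.
    transitivity (a * ((a+b) * geo a b k) + (a+b) * (-b) ^ Z.of_nat k); [ring|].
    rewrite IH. ring.
Qed.

Lemma geo_odd a b k : Z.odd a = true -> Z.odd b = true ->
  Z.odd (geo a b k) = Nat.odd k.
Proof.
  intros Ha Hb. induction k as [|k IH]; simpl geo.
  - reflexivity.
  - rewrite Z.odd_add, Z.odd_mul, Ha, IH.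
    destruct (Nat.eq_dec k 0) as [->|Hk].
    + reflexivity.
    + rewrite Z.odd_pow by lia. rewrite Z.odd_opp, Hb, Nat.odd_succ.
      rewrite <- Nat.negb_odd. destruct (Nat.odd k); reflexivity.
Qed.

Lemma sq_mod4 a : Z.odd a = true -> exists t, a * a = 4 * t + 1.
Proof.
  intros Ha. destruct (Z.odd_spec a) as [H _]. destruct (H Ha) as [m ->].
  exists (m*m + m). ring.
Qed.

Lemma even_pow_mod4 a m : Z.odd a = true -> exists t, a ^ Z.of_nat (2 * m) = 4 * t + 1.
Proof.
  intros Ha. destruct (sq_mod4 a Ha) as [s Hs].
  induction m as [|m [t IH]].
  - exists 0. reflexivity.
  - replace (Z.of_nat (2 * Datatypes.S m)) with (Z.succ (Z.succ (Z.of_nat (2*m)))) by lia.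
    rewrite !Z.pow_succ_r by lia. rewrite IH.
    exists (4*s*t + s + t).
    transitivity ((a*a) * (4*t+1)); [ring|]. rewrite Hs. ring.
Qed.

Lemma pow_rel_prime p s n : rel_prime p s -> rel_prime (p ^ Z.of_nat n) s.
Proof.
  intros H. induction n as [|n IH].
  - simpl. apply rel_prime_1.
  - rewrite Nat2Z.inj_succ, Z.pow_succ_r by lia.
    apply rel_prime_sym, rel_prime_mult; apply rel_prime_sym; assumption.
Qed.

Lemma key a b beta k : Z.odd a = true -> Z.odd b = true -> (2 <= beta)%nat -> (1 <= k)%nat ->
  (2 ^ Z.of_nat beta | a ^ Z.of_nat k + b ^ Z.of_nat k) -> (2 ^ Z.of_nat beta | a + b).
Proof.
  intros Ha Hb Hbeta Hk Hd.
  destruct (Nat.Even_or_Odd k) as [[m Hm]|[m Hm]].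
  - exfalso. subst k.
    destruct (even_pow_mod4 a m Ha) as [x Hx].
    destruct (even_pow_mod4 b m Hb) as [y Hy].
    rewrite Hx, Hy in Hd.
    assert (H4 : (4 | 2 ^ Z.of_nat beta)).
    { replace (Z.of_nat beta) with (2 + Z.of_nat (beta - 2)) by lia.
      rewrite Z.pow_add_r by lia. exists (2 ^ Z.of_nat (beta - 2)). ring. }
    destruct (Z.divide_trans _ _ _ H4 Hd) as [q Hq]. lia.
  - assert (Hodd : Nat.odd k = true) by (apply Nat.odd_spec; exists m; exact Hm).
    assert (HO : Z.Odd (Z.of_nat k)) by (exists (Z.of_nat m); lia).
    pose proof (geo_id a b k) as Hg.
    rewrite (Z.pow_opp_odd _ _ HO) in Hg.
    replace (a ^ Z.of_nat k - - b ^ Z.of_nat k) with (a ^ Z.of_nat k + b ^ Z.of_nat k) in Hg by ring.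
    rewrite <- Hg in Hd.
    apply Gauss with (geo a b k).
    + rewrite Z.mul_comm. exact Hd.
    + apply pow_rel_prime.
      apply prime_rel_prime; [exact prime_2|].
      intros [q Hq]. pose proof (geo_odd a b k Ha Hb) as Ho.
      rewrite Hodd, Hq in Ho. rewrite Z.odd_mul in Ho. simpl in Ho.
      rewrite Bool.andb_false_r in Ho. discriminate.
Qed.

Theorem corollary2p10 (a b : Z) (beta : nat) :
  a <> 0 -> b <> 0 -> Z.gcd a b = 1 -> Z.odd a = true -> Z.odd b = true ->
  (2 <= beta)%nat ->
  ((~ in_G a b beta 1) <-> ~ (2 ^ Z.of_nat beta | a + b)) /\
  (~ (2 ^ Z.of_nat beta | a + b) <->
     (forall n : nat, Nat.odd n = true -> ~ in_G a b beta (Z.of_nat n))).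
Proof.
  intros _ _ _ Ha Hb Hbeta.
  assert (P1 : (~ in_G a b beta 1) <-> ~ (2 ^ Z.of_nat beta | a + b)).
  { split.
    - intros H Hd. apply H. split; [lia|]. exists 1%nat. split; [lia|].
      rewrite Z.mul_1_r. simpl Z.of_nat. rewrite !Z.pow_1_r. exact Hd.
    - intros H [_ [k [Hk Hd]]]. apply H.
      rewrite Z.mul_1_r in Hd. exact (key a b beta k Ha Hb Hbeta Hk Hd). }
  split; [exact P1|]. split.
  - intros H n _ [_ [k [Hk Hd]]]. apply H.
    apply (key a b beta k Ha Hb Hbeta Hk).
    eapply Z.divide_trans; [|exact Hd]. exists (Z.of_nat n). ring.
  - intros H. apply P1. apply (H 1%nat). reflexivity.
Qed.
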